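(* Let $f\in H^2(\mathbb{D})$. Then $|\langle f,e_{n,a}\rangle|\to 0$ as $|a|\to 1$, uniformly in $n\in\mathbb{N}$; that is, for every $\varepsilon>0$ there is $r<1$ such that $|\langle f,e_{n,a}\rangle|<\varepsilon$ for all $a\in\mathbb{D}$ with $|a|>r$ and all $n\in\mathbb{N}$.
   Context: $\mathbb{D}$ is the open unit disc; $H^2(\mathbb{D})$ the Hardy space with inner product $\langle f,g\rangle=\frac{1}{2\pi}\int_0^{2\pi}f(e^{it})\overline{g(e^{it})}\,dt$. For $n\in\mathbb{N}=\{0,1,\dots\}$ and $a\in\mathbb{D}$, $k_{n,a}(z)=\left(\frac{\partial}{\partial\overline{a}}\right)^n\frac{1}{1-\overline{a}z}=\frac{n!\,z^n}{(1-\overline{a}z)^{n+1}}$ and $e_{n,a}=k_{n,a}/\|k_{n,a}\|$. *)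

(* Defs.v *)
From Stdlib Require Import Reals Arith.
From Coquelicot Require Export Coquelicot.
Open Scope R_scope.

Definition H2 (f : C -> C) (c : nat -> C) : Prop :=
  ex_series (fun k => (Cmod (c k)) ^ 2) /\
  forall z : C, Cmod z < 1 -> is_series (fun k => Cmult (c k) (pow_n z k)) (f z).

Definition h2norm (d : nat -> C) : R := sqrt (Series (fun k => (Cmod (d k)) ^ 2)).

Definition kna (n : nat) (a : C) (z : C) : C :=
  Cdiv (Cmult (RtoC (INR (Factorial.fact n))) (pow_n z n))
       (pow_n (Cminus (RtoC 1) (Cmult (Cconj a) z)) (S n)).

(* Main.v *)
Require Import Defs.
From Stdlib Require Import Reals.
From Coquelicot Require Import Coquelicot.
From Stdlib Require Import Lra Lia.
Open Scope R_scope.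

Lemma sum_n_Re (u : nat -> C) m : sum_n (fun k => Re (u k)) m = Re (sum_n u m).
Proof.
  induction m. - rewrite !sum_O. reflexivity.
  - rewrite !sum_Sn, IHm. reflexivity.
Qed.
Lemma sum_n_Im (u : nat -> C) m : sum_n (fun k => Im (u k)) m = Im (sum_n u m).
Proof.
  induction m. - rewrite !sum_O. reflexivity.
  - rewrite !sum_Sn, IHm. reflexivity.
Qed.

Lemma re_series (u : nat -> C) l : is_series u l -> is_series (fun k => Re (u k)) (Re l).
Proof.
  unfold is_series. intro H.
  apply filterlim_ext with (f := fun m => Re (sum_n u m)).
  { intro m. now rewrite sum_n_Re. }
  eapply filterlim_comp. exact H.
  apply filterlim_locally. intros eps. exists eps. intros y [H1 H2]. exact H1.
Qed.
Lemma im_series (u : nat -> C) l : is_series u l -> is_series (fun k => Im (u k)) (Im l).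
Proof.
  unfold is_series. intro H.
  apply filterlim_ext with (f := fun m => Im (sum_n u m)).
  { intro m. now rewrite sum_n_Im. }
  eapply filterlim_comp. exact H.
  apply filterlim_locally. intros eps. exists eps. intros y [H1 H2]. exact H2.
Qed.
Lemma real_uniq (a : nat -> R) :
  (forall x, Rabs x < 1 -> is_series (fun k => a k * x^k) 0) -> forall k, a k = 0.
Proof.
  intros H k.
  assert (Hb : exists M, forall n, Rabs (a n * (1/2)^n) <= M).
  { assert (Ht : is_lim_seq (fun n => Rabs (a n * (1/2)^n)) 0).
    { assert (X : is_lim_seq (fun n => a n * (1/2)^n) 0).
      { apply ex_series_lim_0. eexists. apply H. rewrite Rabs_pos_eq; lra. }
      apply is_lim_seq_abs in X. simpl in X. rewrite Rabs_R0 in X. exact X. }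
    apply is_lim_seq_Reals in Ht.
    destruct (cauchy_bound _ (CV_Cauchy _ (exist _ 0 Ht))) as [M HM].
    exists M. intro n. apply HM. exists n. reflexivity. }
  assert (Hr : Rbar_lt 0 (CV_radius a)).
  { destruct (CV_radius_bounded a) as [Hub _].
    apply Rbar_lt_le_trans with (Finite (1/2)). simpl; lra.
    apply Hub. exact Hb. }
  apply (PSeries_ext_recip a (fun _ => 0) k Hr).
  - rewrite CV_radius_const_0. simpl. trivial.
  - exists (mkposreal 1 Rlt_0_1). intros y Hy.
    change (Rabs (y - 0) < 1) in Hy. rewrite Rminus_0_r in Hy.
    rewrite PSeries_const_0. apply is_pseries_unique. apply is_pseries_R. now apply H.
Qed.

Lemma pow_n_RtoC (x : R) k : pow_n (RtoC x) k = RtoC (x ^ k).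
Proof.
  induction k. - reflexivity.
  - simpl. rewrite IHk. rewrite RtoC_mult. reflexivity.
Qed.

Lemma cuniq (u : nat -> C) :
  (forall x : R, Rabs x < 1 -> is_series (fun k => Cmult (u k) (pow_n (RtoC x) k)) (RtoC 0)) ->
  forall k, u k = RtoC 0.
Proof.
  intros H k.
  assert (HR : forall k, Re (u k) = 0).
  { apply real_uniq. intros x Hx.
    apply is_series_ext with (a := fun k => Re (Cmult (u k) (pow_n (RtoC x) k))).
    { intro n. rewrite pow_n_RtoC, re_scal_r. reflexivity. }
    apply (re_series _ (RtoC 0)). now apply H. }
  assert (HI : forall k, Im (u k) = 0).
  { apply real_uniq. intros x Hx.
    apply is_series_ext with (a := fun k => Im (Cmult (u k) (pow_n (RtoC x) k))).
    { intro n. rewrite pow_n_RtoC, im_scal_r. reflexivity. }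
    apply (im_series _ (RtoC 0)). now apply H. }
  specialize (HR k). specialize (HI k). destruct (u k) as [p q]. simpl in *. subst. reflexivity.
Qed.

Lemma sum_SnC (a : nat -> C) m : sum_n a (S m) = Cplus (sum_n a m) (a (S m)).
Proof. exact (@sum_Sn C_AbelianMonoid a m). Qed.

Lemma sum_n_single (a : nat -> C) n :
  (forall k, k <> n -> a k = RtoC 0) -> forall m, (n <= m)%nat -> sum_n a m = a n.
Proof.
  intros H m Hm. induction m.
  - assert (n = 0%nat) by lia. subst. now rewrite sum_O.
  - destruct (Nat.eq_dec n (S m)).
    + subst. rewrite sum_SnC.
      assert (E : forall j, (j <= m)%nat -> sum_n a j = RtoC 0).
      { intro j. induction j; intro Hj. rewrite sum_O. apply H. lia.
        rewrite sum_SnC, IHj, H by lia. apply Cplus_0_l. }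
      rewrite (E m) by lia.
      apply Cplus_0_l.
    + rewrite sum_SnC, IHm by lia. rewrite (H (S m)) by lia. apply Cplus_0_r.
Qed.

Lemma series_single (a : nat -> C) n :
  (forall k, k <> n -> a k = RtoC 0) -> is_series a (a n).
Proof.
  intros H. unfold is_series.
  apply filterlim_ext_loc with (f := fun _ => a n).
  - exists n. intros m Hm. symmetry. now apply sum_n_single.
  - apply filterlim_const.
Qed.
Definition dlt (w : C) (x : nat -> C) (k : nat) : C :=
  match k with O => x O | S j => Cminus (x (S j)) (Cmult w (x j)) end.

Lemma is_series_C (a b : nat -> C) (l l' : C) :
  is_series a l -> (forall n, a n = b n) -> l = l' -> is_series b l'.
Proof. intros H E ->. eapply is_series_ext; eauto. Qed.

Ltac cnorm := cbv beta; repeat match goal with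
 | |- context [@plus ?G ?a ?b] => change (@plus G a b) with (Cplus a b)
 | |- context [@opp ?G ?a] => change (@opp G a) with (Copp a)
 | |- context [@mult ?K ?a ?b] => change (@mult K a b) with (Cmult a b)
 | |- context [@one ?K] => change (@one K) with (RtoC 1)
 | |- context [@zero ?G] => change (@zero G) with (RtoC 0)
 | |- context [@scal ?K ?V ?a ?b] => change (@scal K V a b) with (Cmult a b)
end; try match goal with |- @eq _ ?a ?b => change (@eq C a b) end.

Lemma dlt_series w x z S :
  is_series (fun k => Cmult (x k) (pow_n z k)) S ->
  is_series (fun k => Cmult (dlt w x k) (pow_n z k)) (Cmult (Cminus (RtoC 1) (Cmult w z)) S).
Proof.
  intro H.
  set (B := fun k => match k with O => RtoC 0 | S j => Cmult (Cmult w z) (Cmult (x j) (pow_n z j)) end).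
  assert (HB : is_series B (Cmult (Cmult w z) S)).
  { apply is_series_decr_1.
    eapply is_series_C. apply (is_series_scal (Cmult w z) _ _ H).
    - intro n. reflexivity.
    - simpl; cnorm; ring. }
  eapply is_series_C. apply (is_series_minus _ _ _ _ H HB).
  - intro n. destruct n as [|n]; unfold B; simpl; cnorm; ring.
  - simpl; cnorm; ring.
Qed.

Lemma sum_n_nonneg (a : nat -> R) m : (forall k, 0 <= a k) -> 0 <= sum_n a m.
Proof.
  intro H. induction m. rewrite sum_O; auto. rewrite sum_Sn. 
  change (0 <= sum_n a m + a (S m)). specialize (H (S m)). lra.
Qed.

Lemma sum_n_mono (a : nat -> R) m p : (forall k, 0 <= a k) -> (m <= p)%nat -> sum_n a m <= sum_n a p.
Proof.
  intros H Hp. induction Hp. lra. rewrite sum_Sn. change (sum_n a m <= sum_n a m0 + a (S m0)).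
  specialize (H (S m0)). lra.
Qed.

Lemma sum_le_series (a : nat -> R) l m : (forall k, 0 <= a k) -> is_series a l -> sum_n a m <= l.
Proof.
  intros H Hs.
  assert (Hl : is_lim_seq (sum_n a) l) by exact Hs.
  assert (Rbar_le (sum_n a m) l).
  { apply is_lim_seq_le_loc with (u := fun _ => sum_n a m) (v := sum_n a).
    exists m. intros p Hp. apply sum_n_mono; auto.
    apply is_lim_seq_const. exact Hl. }
  exact H0.
Qed.

Lemma term_le_sum (a : nat -> R) m : (forall k, 0 <= a k) -> a m <= sum_n a m.
Proof.
  intro H. destruct m. rewrite sum_O; lra. rewrite sum_Sn.
  change (a (S m) <= sum_n a m + a (S m)). assert (0 <= sum_n a m) by (apply sum_n_nonneg; auto). lra.
Qed.

Lemma key_abstract (A : nat -> R) (s Sm : R) k :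
  0 <= s < 1 -> (forall j, 0 <= A j) -> is_series A Sm ->
  (forall m, A k * s^m <= A (k+m)%nat) -> A k <= (1-s) * Sm.
Proof.
  intros Hs HA HS Hm.
  assert (Hind : forall m, A k * (1 - s^(S m)) <= (1-s) * sum_n A (k+m)).
  { induction m.
    - rewrite Nat.add_0_r. assert (H1 := term_le_sum A k HA). simpl. rewrite Rmult_1_r.
      replace (A k * (1 - s)) with ((1-s) * A k) by ring.
      apply Rmult_le_compat_l; lra.
    - replace (k + S m)%nat with (S (k+m)) by lia. rewrite sum_Sn.
      change (A k * (1 - s ^ S (S m)) <= (1 - s) * (sum_n A (k+m) + A (S (k + m)))).
      specialize (Hm (S m)). replace (k + S m)%nat with (S (k+m)) in Hm by lia.
      assert (X : (1-s) * (A k * s^(S m)) <= (1-s) * A (S (k+m))) by (apply Rmult_le_compat_l; lra).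
      simpl in *. nra. }
  assert (HSm : forall m, A k * (1 - s^(S m)) <= (1-s) * Sm).
  { intro m. eapply Rle_trans. apply Hind. apply Rmult_le_compat_l. lra.
    apply sum_le_series; auto. }
  destruct (Rle_or_lt (A k) ((1-s)*Sm)) as [H|H]; auto.
  exfalso.
  assert (HAk : 0 < A k). { assert (0 <= Sm). { eapply Rle_trans. apply (sum_n_nonneg A 0 HA). apply sum_le_series; auto. } nra. }
  destruct (pow_lt_1_zero s ltac:(rewrite Rabs_pos_eq; lra) ((A k - (1-s)*Sm)/A k)) as [N HN].
  { apply Rdiv_lt_0_compat; lra. }
  specialize (HN (S N) ltac:(lia)). specialize (HSm N).
  rewrite Rabs_pos_eq in HN by (apply pow_le; lra).
  apply Rmult_lt_compat_l with (r := A k) in HN; auto.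
  replace (A k * ((A k - (1 - s) * Sm) / A k)) with (A k - (1-s)*Sm) in HN by (field; lra).
  lra.
Qed.

Lemma iter_series (w : C) (x : nat -> C) (z S : C) j :
  is_series (fun k => Cmult (x k) (pow_n z k)) S ->
  is_series (fun k => Cmult (Nat.iter j (dlt w) x k) (pow_n z k))
            (Cmult (pow_n (Cminus (RtoC 1) (Cmult w z)) j) S).
Proof.
  intro H. induction j.
  - eapply is_series_C. exact H. intro; reflexivity. simpl; cnorm. ring.
  - eapply is_series_C. apply (dlt_series w _ _ _ IHj). intro; reflexivity. simpl; cnorm; ring.
Qed.

Definition Pp n w (y : nat -> C) := exists rho : nat -> R, (forall k, 0 <= rho k) /\
  (forall k, (k < n)%nat -> rho k = 0) /\ forall k, y k = Cmult (RtoC (rho k)) (pow_n w (k - n)).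
Definition Pm n w (y : nat -> C) := exists rho : nat -> R, (forall k, 0 <= rho k) /\
  (forall k, rho k <= rho (S k)) /\
  (forall k, (k < n)%nat -> rho k = 0) /\ forall k, y k = Cmult (RtoC (rho k)) (pow_n w (k - n)).

Fixpoint psum (r : nat -> R) k := match k with O => r O | S j => psum r j + r (S j) end.

Lemma inv_step n w x y : (forall k, dlt w x k = y k) -> Pp n w y -> Pm n w x.
Proof.
  intros Hd [r [H0 [H1 H2]]].
  assert (Pnn : forall k, 0 <= psum r k).
  { induction k; simpl; auto. specialize (H0 (S k)). lra. }
  exists (psum r). split; [|split; [|split]]; auto.
  - intro k; simpl. specialize (H0 (S k)). lra.
  - induction k; intro Hk; simpl. apply H1; auto. rewrite IHk by lia. rewrite H1 by lia. ring.
  - assert (Z : forall k, (k < n)%nat -> psum r k = 0).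
    { induction k; intro Hk; simpl. apply H1; auto. rewrite IHk by lia. rewrite H1 by lia. ring. }
    induction k.
    + simpl psum. rewrite <- H2. exact (Hd 0%nat).
    + assert (E : x (S k) = Cplus (y (S k)) (Cmult w (x k))).
      { rewrite <- Hd. simpl. ring. }
      rewrite E, IHk, H2. simpl psum. rewrite RtoC_plus.
      destruct (Nat.lt_ge_cases k n) as [Hk|Hk].
      * rewrite Z by auto. replace (k - n)%nat with 0%nat by lia. simpl. cnorm. ring.
      * replace (S k - n)%nat with (S (k - n)) by lia. simpl. cnorm. ring.
Qed.

Lemma Pm_Pp n w x : Pm n w x -> Pp n w x.
Proof. intros [r [A [B [C D]]]]. exists r. auto. Qed.

Lemma down n w j : forall x, Pp n w (Nat.iter (S j) (dlt w) x) -> Pm n w x.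
Proof.
  induction j; intros x H.
  - eapply inv_step; [|exact H]. intro; reflexivity.
  - rewrite Nat.iter_succ_r in H. apply IHj in H. apply Pm_Pp in H.
    eapply inv_step; [|exact H]. intro; reflexivity.
Qed.

Lemma Cmod_pow_n (w : C) m : Cmod (pow_n w m) = Cmod w ^ m.
Proof. induction m. simpl. apply Cmod_1. simpl. change (Cmod (Cmult w (pow_n w m)) = Cmod w * Cmod w ^ m).
  rewrite Cmod_mult, IHm. reflexivity. Qed.

Lemma key (a : C) n (d : nat -> C) :
  Cmod a < 1 -> Pm n (Cconj a) d -> ex_series (fun k => Cmod (d k) ^ 2) ->
  forall k, Cmod (d k) ^ 2 <= (1 - Cmod a ^ 2) * Series (fun k => Cmod (d k) ^ 2).
Proof.
  intros Ha [r [H0 [H1 [H2 H3]]]] Hex k.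
  set (t := Cmod a).
  assert (Ht : 0 <= t) by apply Cmod_ge_0.
  assert (Hd : forall j, Cmod (d j) = r j * t ^ (j - n)).
  { intro j. rewrite H3, Cmod_mult, Cmod_R, Cmod_pow_n, Cmod_conj, Rabs_pos_eq; auto. }
  apply (key_abstract (fun j => Cmod (d j) ^ 2) (t^2) _ k).
  - split. apply pow2_ge_0. simpl. fold t in Ha. nra.
  - intro; apply pow2_ge_0.
  - apply Series_correct. exact Hex.
  - intro m. rewrite !Hd.
    destruct (Nat.lt_ge_cases k n) as [Hk|Hk].
    + rewrite H2 by auto. rewrite Rmult_0_l. simpl. rewrite !Rmult_0_l. apply pow2_ge_0.
    + assert (Hr : r k <= r (k + m)%nat).
      { clear -H1. induction m. rewrite Nat.add_0_r; lra. eapply Rle_trans. apply IHm.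
        replace (k + S m)%nat with (S (k+m)) by lia. apply H1. }
      replace (k + m - n)%nat with ((k - n) + m)%nat by lia.
      rewrite pow_add.
      replace ((t^2)^m) with ((t^m)^2) by (rewrite <- !pow_mult, Nat.mul_comm; reflexivity).
      assert (0 <= t^(k-n)) by (apply pow_le; auto).
      assert (0 <= t^m) by (apply pow_le; auto).
      assert (0 <= r k) by auto.
      replace ((r k * t ^ (k - n)) ^ 2 * (t ^ m) ^ 2) with ((r k * (t ^ (k - n) * t^m)) ^ 2) by ring.
      apply pow_incr. split. apply Rmult_le_pos; auto. apply Rmult_le_pos; auto.
      apply Rmult_le_compat_r; auto. apply Rmult_le_pos; auto.
Qed.

Lemma pow_n_neq0 (u : C) m : u <> RtoC 0 -> pow_n u m <> RtoC 0.
Proof.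
  intros H. apply Cmod_gt_0. rewrite Cmod_pow_n. apply pow_lt. apply Cmod_gt_0. exact H.
Qed.

Lemma one_minus_neq0 (w z : C) : Cmod w * Cmod z < 1 -> Cminus (RtoC 1) (Cmult w z) <> RtoC 0.
Proof.
  intros H. apply Cmod_gt_0.
  assert (T := Cmod_triangle (Cminus (RtoC 1) (Cmult w z)) (Cmult w z)).
  replace (Cplus (Cminus (RtoC 1) (Cmult w z)) (Cmult w z)) with (RtoC 1) in T by ring.
  rewrite Cmod_1, Cmod_mult in T. lra.
Qed.

Lemma d_Pm (a : C) n d : Cmod a < 1 -> H2 (kna n a) d -> Pm n (Cconj a) d.
Proof.
  intros Ha [_ Hd].
  set (w := Cconj a).
  set (E := fun k => if Nat.eq_dec k n then RtoC (INR (Factorial.fact n)) else RtoC 0).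
  assert (HY : forall k, Nat.iter (S n) (dlt w) d k = E k).
  { assert (U : forall k, Cminus (Nat.iter (S n) (dlt w) d k) (E k) = RtoC 0).
    { apply cuniq. intros x Hx.
      assert (Hz : Cmod (RtoC x) < 1) by (rewrite Cmod_R; auto).
      assert (Hp : pow_n (Cminus (RtoC 1) (Cmult w (RtoC x))) (S n) <> RtoC 0).
      { apply pow_n_neq0, one_minus_neq0. unfold w. rewrite Cmod_conj.
        assert (0 <= Cmod a) by apply Cmod_ge_0. assert (0 <= Cmod (RtoC x)) by apply Cmod_ge_0. nra. }
      assert (H1 := iter_series w d (RtoC x) _ (S n) (Hd (RtoC x) Hz)).
      assert (H3 : is_series (fun k => Cmult (E k) (pow_n (RtoC x) k)) (Cmult (E n) (pow_n (RtoC x) n))).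
      { apply (series_single (fun k => Cmult (E k) (pow_n (RtoC x) k)) n).
        intros k Hk. unfold E. destruct (Nat.eq_dec k n); [congruence|]. cnorm. ring. }
      eapply is_series_C. apply (is_series_minus _ _ _ _ H1 H3).
      - intro m. cnorm. ring.
      - unfold kna, E. destruct (Nat.eq_dec n n) as [_|]; [|congruence]. 
        change (Cconj a) with w. revert Hp. generalize (pow_n (Cminus (RtoC 1) (Cmult w (RtoC x))) (S n)).
        intros P HP. cnorm. field. exact HP. }
    intro k. specialize (U k).
    replace (Nat.iter (S n) (dlt w) d k) with (Cplus (Cminus (Nat.iter (S n) (dlt w) d k) (E k)) (E k)) by ring.
    rewrite U. ring. }
  apply (down n w n d).
  exists (fun k => if Nat.eq_dec k n then INR (Factorial.fact n) else 0).
  split; [|split].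
  - intro k. destruct (Nat.eq_dec k n). apply pos_INR. lra.
  - intros k Hk. destruct (Nat.eq_dec k n). lia. reflexivity.
  - intro k. rewrite HY. unfold E. destruct (Nat.eq_dec k n).
    + subst. rewrite Nat.sub_diag. simpl. cnorm. ring.
    + ring.
Qed.

Lemma sum_n_SnR (a : nat -> R) m : sum_n a (S m) = sum_n a m + a (S m).
Proof. exact (@sum_Sn R_AbelianMonoid a m). Qed.

Lemma sum_n_lin (p q : nat -> R) (al be : R) m :
  sum_n (fun k => al * p k + be * q k) m = al * sum_n p m + be * sum_n q m.
Proof. induction m. rewrite !sum_O. reflexivity. rewrite !sum_n_SnR, IHm. match goal with |- @eq _ ?a ?b => change (@eq R a b) end. ring. Qed.

Lemma sum_n_leR (p q : nat -> R) m : (forall k, p k <= q k) -> sum_n p m <= sum_n q m.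
Proof. intro H. induction m. rewrite !sum_O. auto. rewrite !sum_n_SnR. specialize (H (S m)). lra. Qed.

Lemma sum_n_shift_le (a : nat -> R) M m : (forall k, 0 <= a k) ->
  sum_n (fun k => a (M + k)%nat) m <= sum_n a (M + m).
Proof.
  intro H. induction m.
  - rewrite sum_O, Nat.add_0_r. apply term_le_sum; auto.
  - rewrite sum_n_SnR. replace (M + S m)%nat with (S (M + m)) by lia. rewrite sum_n_SnR. lra.
Qed.

Lemma norm_sum_C (u : nat -> C) m : Cmod (sum_n u m) <= sum_n (fun k => Cmod (u k)) m.
Proof.
  induction m. rewrite !sum_O. lra.
  rewrite sum_n_SnR, sum_SnC. eapply Rle_trans. apply Cmod_triangle. lra.
Qed.

Lemma sqrt2_lt_2 : sqrt 2 < 2.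
Proof.
  replace 2 with (sqrt 4) at 2. apply sqrt_lt_1; lra.
  replace 4 with (2*2) by ring. apply sqrt_square; lra.
Qed.

Lemma series_bound (v : nat -> C) (l : C) B : is_series v l -> (forall m, Cmod (sum_n v m) <= B) -> Cmod l <= B.
Proof.
  intros Hs Hb. destruct (Rle_or_lt (Cmod l) B) as [H|H]; auto. exfalso.
  assert (He : 0 < (Cmod l - B) / 2) by lra.
  destruct (proj1 (filterlim_locally _ _) Hs (mkposreal _ He)) as [N HN].
  specialize (HN N (Nat.le_refl N)).
  apply C_NormedModule_mixin_compat2 in HN. simpl in HN.
  assert (T := Cmod_triangle (sum_n v N) (Cminus l (sum_n v N))).
  replace (Cplus (sum_n v N) (Cminus l (sum_n v N))) with l in T by ring.
  change (Cmod (Cminus (sum_n v N) l) < sqrt 2 * ((Cmod l - B) / 2)) in HN.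
  assert (X : Cmod (Cminus l (sum_n v N)) = Cmod (Cminus (sum_n v N) l)).
  { rewrite <- Cmod_opp. f_equal. ring. }
  specialize (Hb N). assert (Y := sqrt2_lt_2). assert (0 <= sqrt 2) by apply sqrt_pos. rewrite X in T. assert (sqrt 2 * ((Cmod l - B) / 2) < 2 * ((Cmod l - B) / 2)) by (apply Rmult_lt_compat_r; lra). lra.
Qed.

Lemma Cdiv_0 (x : C) : Cdiv x (RtoC 0) = RtoC 0.
Proof.
  destruct x as [p q]. unfold Cdiv, Cinv, Cmult, RtoC. simpl. f_equal; rewrite ?Rmult_0_l, ?Ropp_0; unfold Rdiv; ring.
Qed.

Lemma sum_n_scalR (p : nat -> R) al m : sum_n (fun k => al * p k) m = al * sum_n p m.
Proof. induction m. rewrite !sum_O. reflexivity. rewrite !sum_n_SnR, IHm.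
  match goal with |- @eq _ ?a ?b => change (@eq R a b) end. ring. Qed.

Lemma is_series_R_eq (a : nat -> R) (l l' : R) : is_series a l -> l = l' -> is_series a l'.
Proof. intros H ->. exact H. Qed.

Lemma amgm (x y dl : R) : 0 < dl -> x * y <= / (2 * dl) * x ^ 2 + dl / 2 * y ^ 2.
Proof.
  intro Hd. assert (H : 0 <= (x - dl * y) ^ 2) by apply pow2_ge_0.
  assert (H1 : x * y * (2 * dl) <= x ^ 2 + dl ^ 2 * y ^ 2) by nra.
  replace (/ (2 * dl) * x ^ 2 + dl / 2 * y ^ 2) with ((x ^ 2 + dl ^ 2 * y ^ 2) * / (2 * dl)) by (field; lra).
  replace (x * y) with (x * y * (2 * dl) * / (2 * dl)) by (field; lra).
  apply Rmult_le_compat_r; auto. left. apply Rinv_0_lt_compat. lra.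
Qed.

Theorem lemma3 (f : C -> C) (c : nat -> C) :
  H2 f c ->
  forall eps : R, 0 < eps ->
  exists r : R, r < 1 /\
    forall (a : C) (n : nat) (d : nat -> C) (L : C),
      Cmod a < 1 -> r < Cmod a ->
      H2 (kna n a) d ->
      is_series (fun k => Cmult (c k) (Cconj (Cdiv (d k) (RtoC (h2norm d))))) L ->
      Cmod L < eps.
Proof.
  intros [Hc _] eps Heps.
  set (Ac := fun k => Cmod (c k) ^ 2).
  assert (HAc : forall k, 0 <= Ac k) by (intro; apply pow2_ge_0).
  set (Sc := Series Ac).
  assert (HSc : is_series Ac Sc) by (apply Series_correct; exact Hc).
  set (dl := eps / 2).
  assert (Hdl : 0 < dl) by (unfold dl; lra).
  assert (Hd2 : 0 < dl * dl) by nra.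
  destruct (proj1 (filterlim_locally _ _) HSc (mkposreal _ Hd2)) as [m0 Hm0].
  specialize (Hm0 m0 (Nat.le_refl m0)).
  change (Rabs (sum_n Ac m0 - Sc) < dl * dl) in Hm0.
  apply Rabs_def2 in Hm0.
  set (M := S m0).
  set (T := Sc - sum_n Ac m0).
  assert (HT0 : T < dl * dl) by (unfold T; lra).
  assert (HT : is_series (fun k => Ac (M + k)%nat) T).
  { apply (is_series_incr_n Ac M T). unfold M; lia.
    apply (is_series_R_eq _ Sc). exact HSc.
    unfold T, M. simpl pred. change (Sc = Sc - sum_n Ac m0 + sum_n Ac m0). ring. }
  set (Hh := sum_n (fun k => Cmod (c k)) m0).
  assert (HH : 0 <= Hh) by (apply sum_n_nonneg; intro; apply Cmod_ge_0).
  set (tau := eps / (2 * Hh + 2)).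
  assert (Htau : 0 < tau) by (unfold tau; apply Rdiv_lt_0_compat; lra).
  assert (Htau2 : tau * (2 * Hh + 2) = eps) by (unfold tau; field; lra).
  exists (1 - tau * tau / 2). split. nra.
  intros a n d L Ha Hr Hk HL.
  assert (HP := d_Pm a n d Ha Hk).
  destruct Hk as [Hdex _].
  assert (Hkey := key a n d Ha HP Hdex).
  set (SD := Series (fun k => Cmod (d k) ^ 2)).
  fold SD in Hkey.
  assert (HSD : is_series (fun k => Cmod (d k) ^ 2) SD) by (apply Series_correct; exact Hdex).
  assert (HSD0 : 0 <= SD).
  { eapply Rle_trans. apply (sum_n_nonneg (fun k => Cmod (d k) ^ 2) 0). intro; apply pow2_ge_0.
    apply sum_le_series; auto. intro; apply pow2_ge_0. }
  set (e := fun k => Cdiv (d k) (RtoC (h2norm d))).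
  assert (Hae : 0 <= Cmod a) by apply Cmod_ge_0.
  assert (Hsmall : 1 - Cmod a ^ 2 < tau * tau) by (simpl; nra).
  assert (F : (forall k, Cmod (e k) < tau) /\
              (forall m, sum_n (fun k => Cmod (e (M + k)%nat) ^ 2) m <= 1)).
  { destruct (Req_dec SD 0) as [Z|Z].
    - assert (Ez : forall k, e k = RtoC 0).
      { intro k. unfold e, h2norm. fold SD. rewrite Z, sqrt_0. apply Cdiv_0. }
      split.
      + intro k. rewrite Ez, Cmod_R, Rabs_R0. auto.
      + intro m. eapply Rle_trans. apply (sum_n_leR _ (fun k => 0 * Ac k)).
        intro k. rewrite Ez, Cmod_R, Rabs_R0. simpl. lra.
        rewrite sum_n_scalR. lra.
    - assert (Hpos : 0 < SD) by lra.
      assert (Hs : 0 < sqrt SD) by (apply sqrt_lt_R0; auto).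
      assert (Ee : forall k, Cmod (e k) ^ 2 = / SD * Cmod (d k) ^ 2).
      { intro k. unfold e, h2norm. fold SD. rewrite Cmod_div.
        rewrite Cmod_R, Rabs_pos_eq by lra.
        replace SD with (sqrt SD * sqrt SD) at 2 by (apply sqrt_sqrt; lra).
        field. lra. intro X. apply RtoC_inj in X. lra. }
      split.
      + intro k. specialize (Hkey k). assert (X := Ee k).
        assert (Y : / SD * Cmod (d k) ^ 2 <= 1 - Cmod a ^ 2).
        { apply Rmult_le_reg_l with SD; auto. rewrite <- Rmult_assoc, Rinv_r by lra. lra. }
        assert (0 <= Cmod (e k)) by apply Cmod_ge_0.
        destruct (Rlt_or_le (Cmod (e k)) tau) as [W|W]; auto.
        assert (tau * tau <= Cmod (e k) ^ 2) by (simpl; nra). lra.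
      + intro m. 
        replace (sum_n (fun k => Cmod (e (M + k)%nat) ^ 2) m) with
                (/ SD * sum_n (fun k => Cmod (d (M + k)%nat) ^ 2) m).
        2:{ rewrite <- sum_n_scalR. apply sum_n_ext. intro k. rewrite Ee. reflexivity. }
        apply Rmult_le_reg_l with SD; auto. rewrite <- Rmult_assoc, Rinv_r, Rmult_1_l, Rmult_1_r by lra.
        eapply Rle_trans. apply (sum_n_shift_le (fun k => Cmod (d k) ^ 2)). intro; apply pow2_ge_0.
        apply sum_le_series; auto. intro; apply pow2_ge_0. }
  destruct F as [F1 F2].
  set (u := fun k => Cmult (c k) (Cconj (e k))).
  assert (Hu : forall k, Cmod (u k) = Cmod (c k) * Cmod (e k)).
  { intro k. unfold u. rewrite Cmod_mult, Cmod_conj. reflexivity. }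
  change (is_series u L) in HL.
  set (hd := sum_n u m0).
  assert (Hhd : Cmod hd < eps / 2).
  { eapply Rle_lt_trans. apply norm_sum_C.
    eapply Rle_lt_trans. apply (sum_n_leR _ (fun k => tau * Cmod (c k))).
    { intro k. rewrite Hu. assert (0 <= Cmod (c k)) by apply Cmod_ge_0.
      assert (Cmod (e k) <= tau) by (left; auto). nra. }
    rewrite sum_n_scalR. fold Hh. nra. }
  assert (HLt : is_series (fun k => u (M + k)%nat) (Cminus L hd)).
  { apply (is_series_incr_n u M (Cminus L hd)). unfold M; lia.
    eapply is_series_C. exact HL. intro; reflexivity.
    unfold M, hd. simpl pred. change (L = Cplus (Cminus L (@sum_n C_AbelianMonoid u m0)) (@sum_n C_AbelianMonoid u m0)). ring. }
  assert (Htl : Cmod (Cminus L hd) < eps / 2).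
  { eapply Rle_lt_trans. apply (series_bound _ _ (/ (2 * dl) * T + dl / 2) HLt).
    - intro m. eapply Rle_trans. apply norm_sum_C.
      eapply Rle_trans. apply (sum_n_leR _ (fun k => / (2 * dl) * Ac (M + k)%nat + dl / 2 * Cmod (e (M + k)%nat) ^ 2)).
      { intro k. rewrite Hu. apply amgm; auto. }
      rewrite sum_n_lin.
      assert (A1 := sum_le_series _ _ m (fun k => HAc (M + k)%nat) HT).
      assert (A2 := F2 m).
      assert (0 < / (2 * dl)) by (apply Rinv_0_lt_compat; lra).
      nra.
    - assert (/ (2 * dl) * T < / (2 * dl) * (dl * dl)).
      { apply Rmult_lt_compat_l; auto. apply Rinv_0_lt_compat; lra. }
      replace (/ (2 * dl) * (dl * dl)) with (dl / 2) in H by (field; lra).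
      unfold dl in *. lra. }
  assert (TT := Cmod_triangle hd (Cminus L hd)).
  replace (Cplus hd (Cminus L hd)) with L in TT by ring.
  lra.
Qed.
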